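(* Let $\alpha\in(0,1)$, $f>0$, $\varpi>0$, $R>0$. There exist a threshold $p^*\in(0,1)$ and a smooth function $\hat I:[p^*,1)\to(0,+\infty)$ such that: (1) for every $p\in(0,p^* )$, $U_0(p)\ge\sup_{I\ge0}U(p,I)$ (not insuring is optimal); (2) for $p=p^*$, $U_0(p^* )=\max_{I\ge0}U(p^*,I)=U(p^*,\hat I(p^* ))$ with $\hat I(p^* )>0$ (indifference between not insuring and insuring at indemnity $\hat I(p^* )$); (3) for every $p\in(p^*,1)$, $\max_{I\ge0}U(p,I)=U(p,\hat I(p))>U_0(p)$ with $\hat I(p)>0$ (insuring at indemnity $\hat I(p)$ is optimal).
   Context: Insurance model: a good of value $\varpi$ may be totally lost. The premium for indemnity $I$ is $P(I)=\alpha I+f$. The utility is $u(w)=1-e^{-Rw}$. For a probability of loss $p\in(0,1)$, the expected utility of not insuring is $U_0(p)=(1-p)u(\varpi)+p\,u(0)=(1-p)(1-e^{-R\varpi})$, and the expected utility of insuring with indemnity $I$ is $U(p,I)=(1-p)u(\varpi-P(I))+p\,u(I-P(I))=1-p e^{-R(I-P(I))}-(1-p)e^{-R(\varpi-P(I))}$. *)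

(* Defs.v *)
From Stdlib Require Import Reals.
Open Scope R_scope.

Definition util (Ra w : R) : R := 1 - exp (- Ra * w).

Definition premium (alpha f I : R) : R := alpha * I + f.

Definition U0 (Ra varpi p : R) : R :=
  (1 - p) * util Ra varpi + p * util Ra 0.

Definition U (alpha f varpi Ra p I : R) : R :=
  (1 - p) * util Ra (varpi - premium alpha f I)
  + p * util Ra (I - premium alpha f I).

Definition smooth_on_open (a b : R) (h : R -> R) : Prop :=
  exists g : nat -> R -> R,
    (forall x, a < x < b -> g O x = h x) /\
    (forall n x, a < x < b -> derivable_pt_lim (g n) x (g (S n) x)).

(* Main.v *)
Require Import Defs.
From Stdlib Require Import Reals Lra Rsqrt_def Ranalysis5 Factorial.
From Coquelicot Require Import Coquelicot.
Open Scope R_scope.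

Definition Ih (alpha varpi Ra p : R) :=
  varpi + (ln p - ln (1-p) + ln ((1-alpha)/alpha)) / Ra.

Definition gI (alpha varpi Ra : R) (n : nat) : R -> R :=
  match n with
  | O => Ih alpha varpi Ra
  | S m => fun x => INR (fact m) / Ra * ((-1)^m / x^(S m) + / (1-x)^(S m))
  end.

Lemma Ih_smooth alpha varpi Ra : 0 < Ra -> smooth_on_open 0 1 (Ih alpha varpi Ra).
Proof.
  intros HR. exists (gI alpha varpi Ra). split; [reflexivity|].
  intros n x Hx. apply is_derive_Reals.
  destruct n as [|m]; simpl gI.
  - unfold Ih. auto_derive.
    + repeat split; lra.
    + field. lra.
  - auto_derive.
    + assert (x ^ m <> 0) by (apply pow_nonzero; lra).
      assert ((1 + - x) ^ m <> 0) by (apply pow_nonzero; lra).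
      repeat split; apply Rmult_integral_contrapositive_currified; lra.
    + rewrite plus_INR, mult_INR.
      destruct m as [|k].
      * simpl. field. lra.
      * assert (x ^ k <> 0) by (apply pow_nonzero; lra).
        assert ((1 + - x) ^ k <> 0) by (apply pow_nonzero; lra).
        assert ((1 - x) ^ k <> 0) by (apply pow_nonzero; lra).
        rewrite S_INR. simpl Init.Nat.pred. simpl pow.
        replace (1 + - x) with (1 - x) by ring.
        field. repeat split; lra.
Qed.

Lemma exp_Ih alpha varpi Ra p : 0 < alpha < 1 -> 0 < Ra -> 0 < p < 1 ->
  exp (Ra * (Ih alpha varpi Ra p - varpi)) = p / (1-p) * ((1-alpha)/alpha).
Proof.
  intros Ha HR Hp. unfold Ih.
  replace (Ra * (varpi + (ln p - ln (1 - p) + ln ((1 - alpha) / alpha)) / Ra - varpi))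
    with (ln p + - ln (1-p) + ln ((1 - alpha) / alpha)) by (field; lra).
  assert (0 < (1 - alpha) / alpha) by (apply Rdiv_lt_0_compat; lra).
  rewrite !exp_plus, exp_Ropp, (exp_ln p), (exp_ln (1-p)), (exp_ln ((1 - alpha) / alpha)); try lra.
  all: try (unfold Rdiv; ring).
Qed.

Lemma opt alpha f varpi Ra p I : 0 < alpha < 1 -> 0 < Ra -> 0 < p < 1 ->
  U alpha f varpi Ra p I <= U alpha f varpi Ra p (Ih alpha varpi Ra p).
Proof.
  intros Ha HR Hp. pose proof (exp_Ih alpha varpi Ra p Ha HR Hp) as HE.
  set (J := Ih alpha varpi Ra p) in *.
  unfold U, util, premium.
  set (E1 := exp (- Ra * (varpi - (alpha * J + f)))).
  set (E2 := exp (- Ra * (J - (alpha * J + f)))).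
  set (t := I - J).
  assert (H1 : exp (- Ra * (varpi - (alpha * I + f))) = E1 * exp (Ra * alpha * t)).
  { unfold E1, t; rewrite <- exp_plus; f_equal; ring. }
  assert (H2 : exp (- Ra * (I - (alpha * I + f))) = E2 * exp (- Ra * (1-alpha) * t)).
  { unfold E2, t; rewrite <- exp_plus; f_equal; ring. }
  assert (H3 : E1 = E2 * exp (Ra * (J - varpi))).
  { unfold E1, E2; rewrite <- exp_plus; f_equal; ring. }
  rewrite HE in H3.
  assert (FOC : (1-p) * alpha * E1 = p * (1-alpha) * E2).
  { rewrite H3. field; lra. }
  rewrite H1, H2.
  pose proof (exp_ineq1_le (Ra * alpha * t)).
  pose proof (exp_ineq1_le (- Ra * (1-alpha) * t)).
  assert (0 < E1) by apply exp_pos. assert (0 < E2) by apply exp_pos.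
  assert (0 <= (1-p) * E1 * (exp (Ra * alpha * t) - (1 + Ra * alpha * t))).
  { apply Rmult_le_pos; [apply Rmult_le_pos|]; lra. }
  assert (0 <= p * E2 * (exp (- Ra * (1-alpha) * t) - (1 + - Ra * (1-alpha) * t))).
  { apply Rmult_le_pos; [apply Rmult_le_pos|]; lra. }
  assert (Ra * t * ((1-p) * alpha * E1 - p * (1-alpha) * E2) = 0) by (rewrite FOC; ring).
  nra.
Qed.

Lemma aff alpha f varpi Ra I p s :
  s * (U0 Ra varpi p - U alpha f varpi Ra p I)
  = p * (U0 Ra varpi s - U alpha f varpi Ra s I)
    + (s - p) * (U0 Ra varpi 0 - U alpha f varpi Ra 0 I).
Proof. unfold U0, U. ring. Qed.

Lemma h0_pos alpha f varpi Ra I : 0 < alpha < 1 -> 0 < f -> 0 < Ra -> 0 <= I ->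
  0 < U0 Ra varpi 0 - U alpha f varpi Ra 0 I.
Proof.
  intros Ha Hf HR HI. unfold U0, U, util, premium.
  assert (exp (- Ra * varpi) < exp (- Ra * (varpi - (alpha * I + f)))).
  { apply exp_increasing. assert (0 < Ra * (alpha * I + f)).
    { apply Rmult_lt_0_compat; nra. } nra. }
  lra.
Qed.

Lemma Ih_incr alpha varpi Ra p q : 0 < Ra -> 0 < p -> p < q -> q < 1 ->
  Ih alpha varpi Ra p < Ih alpha varpi Ra q.
Proof.
  intros HR Hp Hpq Hq. unfold Ih.
  assert (ln p < ln q) by (apply ln_increasing; lra).
  assert (ln (1-q) < ln (1-p)) by (apply ln_increasing; lra).
  apply Rplus_lt_compat_l. unfold Rdiv. apply Rmult_lt_compat_r.
  - apply Rinv_0_lt_compat; lra.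
  - lra.
Qed.

Definition G alpha f varpi Ra p :=
  U alpha f varpi Ra p (Ih alpha varpi Ra p) - U0 Ra varpi p.

Lemma G_cont alpha f varpi Ra a : 0 < a < 1 -> continuity_pt (G alpha f varpi Ra) a.
Proof.
  intros Ha. apply continuity_pt_filterlim. apply (ex_derive_continuous (K:=R_AbsRing) (V:=R_NormedModule)).
  unfold G, U, U0, util, premium, Ih. auto_derive. repeat split; lra.
Qed.

Lemma div_lt1 x y : 0 < y -> x < y -> x / y < 1.
Proof. intros. apply (Rmult_lt_reg_r y); auto. unfold Rdiv; rewrite Rmult_assoc, Rinv_l; lra. Qed.

Lemma Ih_p0 alpha varpi Ra : 0 < alpha < 1 -> 0 < Ra ->
  let r := exp (- Ra * varpi) / ((1-alpha)/alpha) in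
  Ih alpha varpi Ra (r / (1 + r)) = 0.
Proof.
  intros Ha HR r.
  assert (Hc : 0 < (1-alpha)/alpha) by (apply Rdiv_lt_0_compat; lra).
  assert (Hr : 0 < r) by (apply Rdiv_lt_0_compat; [apply exp_pos|lra]).
  unfold Ih.
  assert (E : ln (r / (1+r)) - ln (1 - r/(1+r)) = ln r).
  { rewrite <- ln_div.
    - f_equal. field. lra.
    - apply Rdiv_lt_0_compat; lra.
    - assert (r / (1+r) < 1) by (apply div_lt1; lra). lra. }
  rewrite E. unfold r. rewrite ln_div, ln_exp; try lra; try apply exp_pos.
  field. lra.
Qed.

Lemma G_neg_Ih0 alpha f varpi Ra p : 0 < f -> 0 < Ra -> 0 < p < 1 ->
  Ih alpha varpi Ra p = 0 -> G alpha f varpi Ra p < 0.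
Proof.
  intros Hf HR Hp H0. unfold G. rewrite H0. unfold U, U0, util, premium.
  assert (exp (- Ra * varpi) < exp (- Ra * (varpi - (alpha * 0 + f)))).
  { apply exp_increasing. nra. }
  assert (exp (- Ra * 0) < exp (- Ra * (0 - (alpha * 0 + f)))).
  { apply exp_increasing. nra. }
  nra.
Qed.

Lemma G_pos_large alpha f varpi Ra : 0 < alpha < 1 -> 0 < Ra ->
  exists q, 0 < q < 1 /\ forall p, q < p < 1 -> 0 < G alpha f varpi Ra p.
Proof.
  intros Ha HR.
  set (T := (f + 1/Ra) / (1-alpha)).
  set (C := exp (- Ra * (varpi - (alpha * T + f)))).
  set (d := 1 - exp (-1)).
  assert (HC : 0 < C) by apply exp_pos.
  assert (Hd : 0 < d).
  { unfold d. assert (exp (-1) < exp 0) by (apply exp_increasing; lra).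
    rewrite exp_0 in H. lra. }
  exists (C / (C + d)). split.
  { split. apply Rdiv_lt_0_compat; lra. apply div_lt1; lra. }
  intros p Hp.
  assert (Hpc : C < p * (C + d)).
  { destruct Hp as [Hp _]. apply (Rmult_lt_compat_r (C+d)) in Hp; [|lra].
    unfold Rdiv in Hp. rewrite Rmult_assoc, Rinv_l in Hp; lra. }
  pose proof (opt alpha f varpi Ra p T Ha HR ltac:(split; [|lra]; apply Rle_lt_trans with (C/(C+d)); [left; apply Rdiv_lt_0_compat; lra| lra])).
  unfold G.
  assert (0 < U alpha f varpi Ra p T - U0 Ra varpi p); [|lra].
  unfold U, U0, util, premium. fold C.
  replace (- Ra * (T - (alpha * T + f))) with (-1) by (unfold T; field; lra).
  fold d. pose proof (exp_pos (- Ra * varpi)). replace (exp (-1)) with (1 - d) by (unfold d; ring). rewrite Rmult_0_r, exp_0. nra.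
Qed.

Theorem proposition4p1 (alpha f varpi Ra : R)
  (Halpha : 0 < alpha < 1) (Hf : 0 < f) (Hvarpi : 0 < varpi) (HR : 0 < Ra) :
  exists (pstar : R) (Ihat : R -> R),
    0 < pstar < 1 /\
    (exists eps, 0 < eps /\ smooth_on_open (pstar - eps) 1 Ihat) /\
    (forall p, pstar <= p < 1 -> 0 < Ihat p) /\
    (forall p, 0 < p < pstar ->
       forall I, 0 <= I -> U alpha f varpi Ra p I <= U0 Ra varpi p) /\
    (0 < Ihat pstar /\
     (forall I, 0 <= I ->
        U alpha f varpi Ra pstar I <= U alpha f varpi Ra pstar (Ihat pstar)) /\
     U0 Ra varpi pstar = U alpha f varpi Ra pstar (Ihat pstar)) /\
    (forall p, pstar < p < 1 ->
       0 < Ihat p /\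
       (forall I, 0 <= I ->
          U alpha f varpi Ra p I <= U alpha f varpi Ra p (Ihat p)) /\
       U alpha f varpi Ra p (Ihat p) > U0 Ra varpi p).
Proof.
  pose proof (Ih_p0 alpha varpi Ra Halpha HR) as H0. simpl in H0.
  set (r := exp (- Ra * varpi) / ((1-alpha)/alpha)) in H0.
  assert (Hr : 0 < r).
  { apply Rdiv_lt_0_compat; [apply exp_pos|]. apply Rdiv_lt_0_compat; lra. }
  set (p0 := r / (1 + r)) in H0.
  assert (Hp0 : 0 < p0 < 1).
  { split. apply Rdiv_lt_0_compat; lra. apply div_lt1; lra. }
  destruct (G_pos_large alpha f varpi Ra Halpha HR) as [q [Hq Hlarge]].
  set (p1 := Rmax ((1+p0)/2) ((1+q)/2)).
  assert (Hp1a : (1+p0)/2 <= p1) by apply Rmax_l.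
  assert (Hp1b : (1+q)/2 <= p1) by apply Rmax_r.
  assert (Hp1c : p1 < 1) by (unfold p1; apply Rmax_lub_lt; lra).
  assert (Gp0 : G alpha f varpi Ra p0 < 0) by (apply G_neg_Ih0; auto).
  assert (Gp1 : 0 < G alpha f varpi Ra p1) by (apply Hlarge; lra).
  destruct (IVT_interv (G alpha f varpi Ra) p0 p1) as [z [Hz Gz]].
  { intros a Ha. apply G_cont. lra. }
  { lra. } { exact Gp0. } { exact Gp1. }
  assert (Hzp0 : p0 < z).
  { destruct (Rle_lt_or_eq_dec p0 z) as [h|h]; [lra|auto|].
    subst z. lra. }
  assert (Hz1 : 0 < z < 1) by lra.
  assert (Ipos : forall p, z <= p < 1 -> 0 < Ih alpha varpi Ra p).
  { intros p Hp. rewrite <- H0.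
    apply Rlt_le_trans with (Ih alpha varpi Ra z).
    - apply Ih_incr; lra.
    - destruct (Rle_lt_or_eq_dec z p) as [h|h]; [lra| |].
      + left. apply Ih_incr; lra.
      + subst; lra. }
  assert (Eq : U0 Ra varpi z = U alpha f varpi Ra z (Ih alpha varpi Ra z)).
  { unfold G in Gz. lra. }
  exists z, (Ih alpha varpi Ra). split; [exact Hz1|]. split.
  { exists z. split; [lra|]. replace (z - z) with 0 by ring. apply Ih_smooth; lra. }
  split; [exact Ipos|]. split.
  { intros p Hp I HI.
    pose proof (aff alpha f varpi Ra I p z).
    pose proof (h0_pos alpha f varpi Ra I Halpha Hf HR HI).
    pose proof (opt alpha f varpi Ra z I Halpha HR Hz1).
    assert (0 <= U0 Ra varpi z - U alpha f varpi Ra z I) by lra.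
    assert (0 <= p * (U0 Ra varpi z - U alpha f varpi Ra z I)) by (apply Rmult_le_pos; lra).
    assert (0 < (z - p) * (U0 Ra varpi 0 - U alpha f varpi Ra 0 I)) by (apply Rmult_lt_0_compat; lra).
    nra. }
  split.
  { split; [apply Ipos; lra|]. split.
    - intros I _. apply opt; auto.
    - exact Eq. }
  intros p Hp. split; [apply Ipos; lra|]. split.
  - intros I _. apply opt; auto; lra.
  - set (I0 := Ih alpha varpi Ra z).
    assert (HI0 : 0 <= I0) by (left; apply Ipos; lra).
    pose proof (aff alpha f varpi Ra I0 p z).
    pose proof (h0_pos alpha f varpi Ra I0 Halpha Hf HR HI0).
    pose proof (opt alpha f varpi Ra p I0 Halpha HR ltac:(lra)).
    assert (0 < (p - z) * (U0 Ra varpi 0 - U alpha f varpi Ra 0 I0)) by (apply Rmult_lt_0_compat; lra).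
    assert (Hz0 : U0 Ra varpi z - U alpha f varpi Ra z I0 = 0) by (unfold I0; lra).
    match goal with H : z * _ = _ |- _ => rewrite Hz0 in H end. nra.
Qed.
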